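(* Let $L, C_H, C_L, R_D, R_H, R_L, E_H, E_L$ be positive constants and set $$\alpha=\frac{1}{R_{DH}C_H},\qquad R_{DH}=\frac{R_DR_H}{R_D+R_H},\qquad \beta_H=\frac{E_H}{R_HC_H},\qquad \beta_L=\frac{E_L}{R_LC_L}.$$ Consider the system $$\dot x_1=-\frac{1}{L}x_3+\frac{1}{L}x_2u,\qquad \dot x_2=-\alpha x_2-\frac{1}{C_H}x_1u+\beta_H,\qquad \dot x_3=\frac{1}{C_L}x_1-\frac{1}{R_LC_L}x_3+\beta_L,$$ where $u=u(t)$ is any control with $u\in\mathcal L_\infty$ (an essentially bounded function of time). Then the system is uniformly stable, i.e. every solution $\xi(t)$ of the system (for this $u$) is uniformly stable: for every $\varepsilon>0$ there is $\delta>0$, independent of the initial time $t_0$, such that any solution $x(t)$ with $\|x(t_0)-\xi(t_0)\|<\delta$ satisfies $\|x(t)-\xi(t)\|<\varepsilon$ for all $t\ge t_0$.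
   Context: The system models a bidirectional buck-boost DC-DC converter: $x_1$ is the inductor current, $x_2$ the high-voltage-side capacitor voltage, $x_3$ the low-voltage-side capacitor voltage; $E_H,R_H$ are the high-voltage source and its internal resistance, $E_L,R_L$ the battery voltage and internal resistance, $R_D$ the load resistance. *)

(* Defs.v *)
From HB Require Import structures.
From mathcomp Require Import all_boot all_order all_algebra.
From mathcomp Require Import all_classical all_reals all_analysis.
Set Implicit Arguments. Unset Strict Implicit. Unset Printing Implicit Defensive.
Import Order.TTheory GRing.Theory Num.Theory.
Local Open Scope classical_set_scope.
Local Open Scope ring_scope.

Section BuckBoost.
Variable R : realType.

Definition R_DH (RD RH : R) : R := RD * RH / (RD + RH).
Definition alpha (RD RH CH : R) : R := 1 / (R_DH RD RH * CH).
Definition beta_H (EH RH CH : R) : R := EH / (RH * CH).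
Definition beta_L (EL RL CL : R) : R := EL / (RL * CL).

Definition Linf (u : R -> R) : Prop :=
  measurable_fun setT u /\
  exists M : R, {ae (@lebesgue_measure R), forall t, `|u t| <= M}.

(* Caratheodory (integral) form of  x' = g  on [t0, +oo):
   for every t >= t0, g is Lebesgue integrable on [t0, t] and
   x t = x t0 + \int_{[t0,t]} g. *)
Definition integral_sol (g x : R -> R) (t0 : R) : Prop :=
  forall t, t0 <= t ->
    (@lebesgue_measure R).-integrable `[t0, t] (EFin \o g) /\
    x t = x t0 + Rintegral (@lebesgue_measure R) `[t0, t] g.

Definition is_solution (L CH CL RD RH RL EH EL : R) (u : R -> R)
    (x1 x2 x3 : R -> R) (t0 : R) : Prop :=
  [/\ integral_sol (fun s => - (1 / L) * x3 s + (1 / L) * x2 s * u s) x1 t0,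
      integral_sol (fun s => - alpha RD RH CH * x2 s - (1 / CH) * x1 s * u s
                             + beta_H EH RH CH) x2 t0
    & integral_sol (fun s => (1 / CL) * x1 s - (1 / (RL * CL)) * x3 s
                             + beta_L EL RL CL) x3 t0].

Definition norm3 (a b c : R) : R := Num.sqrt (a ^+ 2 + b ^+ 2 + c ^+ 2).

End BuckBoost.

(* Main.v *)
Require Import Defs.
From HB Require Import structures.
From mathcomp Require Import all_boot all_order all_algebra.
From mathcomp Require Import all_classical all_reals all_analysis.
From mathcomp Require Import ring lra.
Import Order.TTheory GRing.Theory Num.Theory numFieldNormedType.Exports.
Local Open Scope classical_set_scope.
Local Open Scope ring_scope.

Section Helpers.
Variable R : realType.
Local Notation mu := (@lebesgue_measure R).
Lemma key_mono (V P : R -> R) (a b c : R) : a <= b -> 0 <= c ->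
 (forall s t, a <= s -> s <= t -> t <= b -> P s <= P t) ->
 (forall x, a <= x -> x <= b -> forall e : R, 0 < e -> exists d : R, 0 < d /\
     forall y, a <= y -> y <= b -> `|x - y| < d -> `|P x - P y| < e) ->
 (forall s t, a <= s -> s <= t -> t <= b -> V t - V s <= c * (P t - P s)^+2) ->
 V b <= V a.
Proof.
move=> ab c0 Pmono Pcont HV.
have main : forall eps : R, 0 < eps -> V b - V a <= eps * (P b - P a).
  move=> eps eps0.
  pose S := [set r | a <= r <= b /\ V r - V a <= eps * (P r - P a)].
  have S0 : S a by split; [rewrite lexx ab | rewrite !subrr mulr0].
  have hS : has_sup S.
    split; first by exists a.
    by exists b => r [/andP[_ ->]].
  set m := sup S.
  have am : a <= m := sup_upper_bound hS S0.
  have mb : m <= b by apply: ge_sup; [exists a | move=> r [/andP[_ ->]]].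
  have Sm : V m - V a <= eps * (P m - P a).
    rewrite leNgt; apply/negP => gap.
    set g := V m - V a - eps * (P m - P a).
    have g0 : 0 < g by rewrite /g subr_gt0.
    pose e := Num.min 1 (g / (c + 1)).
    have e0 : 0 < e by rewrite lt_min ltr01 divr_gt0 // ltr_pwDr.
    have e1 : e <= 1 by rewrite ge_min lexx.
    have e2 : e <= g / (c + 1) by rewrite ge_min lexx orbT.
    have [d [d0 Hd]] := Pcont m am mb e e0.
    have [r Sr rm] := sup_adherent d0 hS.
    have r_m : r <= m := sup_upper_bound hS Sr.
    case: Sr => /andP[ar rb] Hr.
    have Prm := Pmono _ _ ar r_m mb.
    have Pmr : P m - P r < e.
      have := Hd r ar rb; rewrite !ger0_norm ?subr_ge0 //; apply.
      rewrite /m; lra.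
    have HVr := HV _ _ ar r_m mb.
    have ec : e * (c + 1) <= g by rewrite -ler_pdivlMr // ltr_pwDr.
    have Pam : P a <= P r by apply: Pmono; rewrite ?lexx.
    have h0 : 0 <= P m - P r by rewrite subr_ge0.
    have h1 : (P m - P r)^+2 <= e^+2 by rewrite ler_pXn2r // ?nnegrE ?ltW.
    have h2 : e^+2 <= e by rewrite expr2 ger_pMr.
    have h3 : c * (P m - P r)^+2 <= c * e by rewrite ler_wpM2l // (le_trans h1).
    have h4 : eps * (P r - P m) <= 0 by rewrite pmulr_rle0 // subr_le0.
    move: gap; rewrite /g in ec *.
    lra.
  have mbq : m = b.
    apply/eqP; rewrite eq_le mb /=; rewrite leNgt; apply/negP => mltb.
    pose e := eps / (c + 1).
    have e0 : 0 < e by rewrite divr_gt0 // ltr_pwDr.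
    have ec : e * (c + 1) <= eps by rewrite -ler_pdivlMr // ltr_pwDr.
    have [d [d0 Hd]] := Pcont m am mb e e0.
    pose r := Num.min b (m + d / 2).
    have rb : r <= b by rewrite ge_min lexx.
    have rd : r <= m + d / 2 by rewrite ge_min lexx orbT.
    have mr : m < r by rewrite lt_min mltb /= ltrDl divr_gt0.
    have ar : a <= r by rewrite (le_trans am) // ltW.
    have Pmr := Pmono _ _ am (ltW mr) rb.
    have Prm : P r - P m < e.
      have := Hd r ar rb; rewrite distrC (distrC (P m)) !ger0_norm ?subr_ge0 ?(ltW mr) //; apply.
      lra.
    have HVr := HV _ _ am (ltW mr) rb.
    have h0 : 0 <= P r - P m by rewrite subr_ge0.
    have h1 : (P r - P m)^+2 <= e * (P r - P m) by rewrite expr2 ler_wpM2r // ltW.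
    have h3 : c * (P r - P m)^+2 <= c * (e * (P r - P m)) by rewrite ler_wpM2l.
    have h5 : c * (e * (P r - P m)) <= eps * (P r - P m).
      rewrite mulrA ler_wpM2r //; lra.
    have Sr : S r by split; [rewrite ar rb | lra].
    have := sup_upper_bound hS Sr; rewrite -/m; lra.
  by move: Sm; rewrite mbq.
have [Pab|] := eqVneq (P b) (P a).
  have := main 1 ltr01; rewrite Pab subrr mulr0; lra.
move=> Pab; have Pab' : P a < P b by rewrite lt_neqAle eq_sym Pab Pmono ?lexx.
rewrite leNgt; apply/negP => Vab.
have := main ((V b - V a) / (2 * (P b - P a))).
rewrite divr_gt0 ?mulr_gt0 ?subr_gt0 // => /(_ isT).
have -> : (V b - V a) / (2 * (P b - P a)) * (P b - P a) = (V b - V a) / 2.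
  by field; rewrite subr_eq0 Pab.
lra.
Qed.
Lemma intZ (s t : R) (f : R -> R) (k : R) :
  mu.-integrable `[s, t] (EFin \o f) -> mu.-integrable `[s, t] (EFin \o (fun x => k * f x)).
Proof.
move=> H; apply: (eq_integrable _ _ _ _ (integrableZl _ k H)) => //=.
Qed.

Lemma intD (s t : R) (f g : R -> R) :
  mu.-integrable `[s, t] (EFin \o f) -> mu.-integrable `[s, t] (EFin \o g) ->
  mu.-integrable `[s, t] (EFin \o (fun x => f x + g x)).
Proof.
move=> H1 H2; apply: (eq_integrable _ _ _ _ (integrableD _ H1 H2)) => //=.
Qed.

Lemma intB (s t : R) (f g : R -> R) :
  mu.-integrable `[s, t] (EFin \o f) -> mu.-integrable `[s, t] (EFin \o g) ->
  mu.-integrable `[s, t] (EFin \o (fun x => f x - g x)).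
Proof.
move=> H1 H2; apply: (eq_integrable _ _ _ _ (integrableB _ H1 H2)) => //=.
Qed.

Lemma intN {s t : R} {f : R -> R} :
  mu.-integrable `[s, t] (EFin \o f) -> mu.-integrable `[s, t] (EFin \o (fun x => `|f x|)).
Proof. by move=> H; apply: (integrable_norm H). Qed.

Lemma gen_ineq (s t : R) (F1 F2 F3 : R -> R) (c1 c2 c3 d1 d2 d3 : R) :
 
  mu.-integrable `[s, t] (EFin \o F1) -> mu.-integrable `[s, t] (EFin \o F2) ->
  mu.-integrable `[s, t] (EFin \o F3) ->
  (forall r, s <= r <= t -> c1 * F1 r + c2 * F2 r + c3 * F3 r <=
                    d1 * `|F1 r| + d2 * `|F2 r| + d3 * `|F3 r|) ->
  c1 * (\int[mu]_(x in `[s, t]) F1 x) + c2 * (\int[mu]_(x in `[s, t]) F2 x)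
     + c3 * (\int[mu]_(x in `[s, t]) F3 x) <=
  d1 * (\int[mu]_(x in `[s, t]) `|F1 x|) + d2 * (\int[mu]_(x in `[s, t]) `|F2 x|)
     + d3 * (\int[mu]_(x in `[s, t]) `|F3 x|).
Proof.
move=> i1 i2 i3 H.
have a1 := intN i1; have a2 := intN i2; have a3 := intN i3.
rewrite -!RintegralZl // -!RintegralD //; try by repeat apply: intD => //; apply: intZ.
apply: le_Rintegral => //; try (by repeat apply: intD => //; apply: intZ).
Qed.

Lemma itv_split (h : R -> R) (a s t : R) : a <= s -> s <= t ->
  mu.-integrable `[a, t] (EFin \o h) ->
  mu.-integrable `[s, t] (EFin \o h) /\
  \int[mu]_(x in `[a, t]) h x = \int[mu]_(x in `[a, s]) h x + \int[mu]_(x in `[s, t]) h x.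
Proof.
move=> aS st H.
have ist : mu.-integrable `[s, t] (EFin \o h).
  by apply: integrableS H => //; apply: subset_itvr; rewrite bnd_simp.
split => //.
have := @Rintegral_itvB R h (BLeft a) (BRight t) s H.
rewrite !bnd_simp => /(_ aS st) E.
have E2 : \int[mu]_(x in `]s, t]) h x = \int[mu]_(x in `[s, t]) h x.
  apply: Rintegral_itv_obnd_cbnd.
  by apply: integrableS ist => //; apply: subset_itvr; rewrite bnd_simp.
lra.
Qed.

Lemma itv_mono (h : R -> R) (s r t : R) : s <= r -> r <= t ->
  mu.-integrable `[s, t] (EFin \o h) ->
  \int[mu]_(x in `[r, t]) `|h x| <= \int[mu]_(x in `[s, t]) `|h x| /\
  \int[mu]_(x in `[s, r]) `|h x| <= \int[mu]_(x in `[s, t]) `|h x|.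
Proof.
move=> sr rt H.
have [_ E] := itv_split _ _ _ _ sr rt (intN H).
have A1 : 0 <= \int[mu]_(x in `[s, r]) `|h x| by apply: Rintegral_ge0 => x _; apply: normr_ge0.
have A2 : 0 <= \int[mu]_(x in `[r, t]) `|h x| by apply: Rintegral_ge0 => x _; apply: normr_ge0.
move: E A1 A2; move: (\int[mu]_(x in `[s, r]) `|h x|) (\int[mu]_(x in `[r, t]) `|h x|) (\int[mu]_(x in `[s, t]) `|h x|).
move=> X Y Z -> ? ?; clear H; split; lra.
Qed.

Lemma add4 (a b x y g : R) : a <= x -> b <= y -> x <= g -> y <= g -> a + b <= 2 * g.
Proof. lra. Qed.

Lemma sum3 (P1 P2 P3 y1 y2 y3 e1 e2 e3 F1 F2 F3 k1 k2 k3 : R) :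
  (y1 - 2 * e1) * (P1 * F1) <= k1 ->
  (y2 - 2 * e2) * (P2 * F2) <= k2 ->
  (y3 - 2 * e3) * (P3 * F3) <= k3 ->
  e1 * (P1 * F1) + e2 * (P2 * F2) + e3 * (P3 * F3) <= 0 ->
  P1 * y1 * F1 + P2 * y2 * F2 + P3 * y3 * F3 <= k1 + k2 + k3.
Proof. nra. Qed.

Lemma fin3 (P1 P2 P3 G1 G2 G3 V : R) : 0 < P1 -> 0 < P2 -> 0 < P3 ->
  0 <= G1 -> 0 <= G2 -> 0 <= G3 ->
  V <= 2 * P1 * G1 * G1 + 2 * P2 * G2 * G2 + 2 * P3 * G3 * G3 ->
  V <= 2 * (P1 + P2 + P3) * (G1 + G2 + G3) ^+ 2.
Proof.
move=> p1 p2 p3 g1 g2 g3 HV.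
set S := G1 + G2 + G3.
have sq : forall G, 0 <= G -> G <= S -> G * G <= S ^+ 2.
  by move=> G G0 GS; rewrite expr2; apply: ler_pM.
have k1 : P1 * (G1 * G1) <= P1 * S ^+ 2.
  by apply: ler_wpM2l; [exact: ltW | apply: sq => //; rewrite /S; lra].
have k2 : P2 * (G2 * G2) <= P2 * S ^+ 2.
  by apply: ler_wpM2l; [exact: ltW | apply: sq => //; rewrite /S; lra].
have k3 : P3 * (G3 * G3) <= P3 * S ^+ 2.
  by apply: ler_wpM2l; [exact: ltW | apply: sq => //; rewrite /S; lra].
move: HV k1 k2 k3; rewrite !mulrA; lra.
Qed.

Lemma pw (P y q F G : R) : 0 < P -> q = P * F -> `|y| <= 2 * G ->
  y * q <= 2 * P * G * `|F|.
Proof.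
move=> P0 -> yG.
apply: (le_trans (ler_norm _)).
rewrite !normrM (gtr0_norm P0).
have hF : 0 <= P * `|F| by rewrite mulr_ge0 // ltW.
have := ler_wpM2r hF yG.
by rewrite -!mulrA [P * (G * _)]mulrCA [`|y| * _]mulrCA.
Qed.

Lemma energy_step (e1 e2 e3 F1 F2 F3 u : R -> R) (L CH CL a' b' t0 : R) :
  0 < L -> 0 < CH -> 0 < CL -> 0 <= a' -> 0 <= b' ->
  (forall s t, t0 <= s -> s <= t ->
     mu.-integrable `[s, t] (EFin \o F1) /\
     e1 t - e1 s = \int[mu]_(x in `[s, t]) F1 x) ->
  (forall s t, t0 <= s -> s <= t ->
     mu.-integrable `[s, t] (EFin \o F2) /\
     e2 t - e2 s = \int[mu]_(x in `[s, t]) F2 x) ->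
  (forall s t, t0 <= s -> s <= t ->
     mu.-integrable `[s, t] (EFin \o F3) /\
     e3 t - e3 s = \int[mu]_(x in `[s, t]) F3 x) ->
  (forall r, L * F1 r = - e3 r + e2 r * u r) ->
  (forall r, CH * F2 r = - a' * e2 r - e1 r * u r) ->
  (forall r, CL * F3 r = e1 r - b' * e3 r) ->
  forall s t, t0 <= s -> s <= t ->
  (L * e1 t ^+ 2 + CH * e2 t ^+ 2 + CL * e3 t ^+ 2) -
  (L * e1 s ^+ 2 + CH * e2 s ^+ 2 + CL * e3 s ^+ 2) <=
  2 * (L + CH + CL) *
  (\int[mu]_(x in `[s, t]) `|F1 x| + \int[mu]_(x in `[s, t]) `|F2 x|
   + \int[mu]_(x in `[s, t]) `|F3 x|) ^+ 2.
Proof.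
move=> L0 CH0 CL0 a0 b0 H1 H2 H3 Q1 Q2 Q3 s t t0s st.
have [i1 D1] := H1 s t t0s st.
have [i2 D2] := H2 s t t0s st.
have [i3 D3] := H3 s t t0s st.
set G1 := \int[mu]_(x in `[s, t]) `|F1 x|.
set G2 := \int[mu]_(x in `[s, t]) `|F2 x|.
set G3 := \int[mu]_(x in `[s, t]) `|F3 x|.
have bnd : forall (e F : R -> R),
   (forall s t, t0 <= s -> s <= t ->
     mu.-integrable `[s, t] (EFin \o F) /\
     e t - e s = \int[mu]_(x in `[s, t]) F x) ->
   forall r, s <= r <= t ->
   `|e t + e s - 2 * e r| <= 2 * \int[mu]_(x in `[s, t]) `|F x|.
  move=> e F HF r /andP[sr rt].
  have [iF _] := HF s t t0s st.
  have [A1 A2] := itv_mono _ _ _ _ sr rt iF.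
  have [j1 E1] := HF r t (le_trans t0s sr) rt.
  have [j2 E2] := HF s r t0s sr.
  have B1 : `|e t - e r| <= \int[mu]_(x in `[r, t]) `|F x|.
    by rewrite E1; apply: le_normr_Rintegral.
  have B2 : `|e r - e s| <= \int[mu]_(x in `[s, r]) `|F x|.
    by rewrite E2; apply: le_normr_Rintegral.
  have -> : e t + e s - 2 * e r = (e t - e r) - (e r - e s) by ring.
  apply: (le_trans (ler_normB _ _)).
  exact: add4 B1 B2 A1 A2.
have step := gen_ineq _ _ _ _ _ (L * (e1 t + e1 s)) (CH * (e2 t + e2 s)) (CL * (e3 t + e3 s))
   (2 * L * G1) (2 * CH * G2) (2 * CL * G3) i1 i2 i3.
have : L * (e1 t + e1 s) * (\int[mu]_(x in `[s, t]) F1 x) +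
       CH * (e2 t + e2 s) * (\int[mu]_(x in `[s, t]) F2 x) +
       CL * (e3 t + e3 s) * (\int[mu]_(x in `[s, t]) F3 x) <=
       2 * L * G1 * G1 + 2 * CH * G2 * G2 + 2 * CL * G3 * G3.
  apply: step => r hr.
  have y1 := bnd _ _ H1 r hr.
  have y2 := bnd _ _ H2 r hr.
  have y3 := bnd _ _ H3 r hr.
  have p1 := pw _ _ _ (F1 r) _ L0 (erefl _) y1.
  have p2 := pw _ _ _ (F2 r) _ CH0 (erefl _) y2.
  have p3 := pw _ _ _ (F3 r) _ CL0 (erefl _) y3.
  have neg : e1 r * (L * F1 r) + e2 r * (CH * F2 r) + e3 r * (CL * F3 r) <= 0.
    rewrite Q1 Q2 Q3.
    have -> : e1 r * (- e3 r + e2 r * u r) + e2 r * (- a' * e2 r - e1 r * u r)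
       + e3 r * (e1 r - b' * e3 r) = - (a' * e2 r ^+ 2 + b' * e3 r ^+ 2) by ring.
    rewrite oppr_le0; apply: addr_ge0; apply: mulr_ge0 => //; apply: sqr_ge0.
  exact: sum3 p1 p2 p3 neg.
move=> HH.
have g1 : 0 <= G1 by apply: Rintegral_ge0 => x _; apply: normr_ge0.
have g2 : 0 <= G2 by apply: Rintegral_ge0 => x _; apply: normr_ge0.
have g3 : 0 <= G3 by apply: Rintegral_ge0 => x _; apply: normr_ge0.
apply: fin3 L0 CH0 CL0 g1 g2 g3 _.
have -> : L * e1 t ^+ 2 + CH * e2 t ^+ 2 + CL * e3 t ^+ 2 -
  (L * e1 s ^+ 2 + CH * e2 s ^+ 2 + CL * e3 s ^+ 2) =
  L * (e1 t + e1 s) * (e1 t - e1 s) + CH * (e2 t + e2 s) * (e2 t - e2 s) +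
  CL * (e3 t + e3 s) * (e3 t - e3 s) by ring.
rewrite D1 D2 D3; exact: HH.
Qed.

Lemma within_cont_eps (f : R -> R) (A : set R) (x : R) :
  {within A, continuous f} -> A x -> forall e : R, 0 < e ->
  exists d : R, 0 < d /\ forall y, A y -> `|x - y| < d -> `|f x - f y| < e.
Proof.
move=> cf Ax e e0.
have := (@subspace_continuousP _ A _ f).1 cf x Ax.
move/cvgrPdist_lt/(_ e e0).
rewrite near_withinE => /nbhs_ballP[d /= d0 H].
exists d; split => // y Ay xy; apply: H => //.
Qed.

Lemma Phi_cont (F1 F2 F3 : R -> R) (a b : R) : a <= b ->
  mu.-integrable `[a, b] (EFin \o F1) -> mu.-integrable `[a, b] (EFin \o F2) ->
  mu.-integrable `[a, b] (EFin \o F3) ->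
  forall x, a <= x -> x <= b -> forall e : R, 0 < e -> exists d : R, 0 < d /\
  forall y, a <= y -> y <= b -> `|x - y| < d ->
  `|(\int[mu]_(z in `[a, x]) `|F1 z| + \int[mu]_(z in `[a, x]) `|F2 z|
      + \int[mu]_(z in `[a, x]) `|F3 z|) -
    (\int[mu]_(z in `[a, y]) `|F1 z| + \int[mu]_(z in `[a, y]) `|F2 z|
      + \int[mu]_(z in `[a, y]) `|F3 z|)| < e.
Proof.
move=> ab i1 i2 i3 x ax xb e e0.
have c1 := parameterized_integral_continuous ab (intN i1).
have c2 := parameterized_integral_continuous ab (intN i2).
have c3 := parameterized_integral_continuous ab (intN i3).
have c := within_continuousD (within_continuousD c1 c2) c3.
have Ax : `[a, b]%classic x by rewrite /= in_itv /= ax xb.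
have [d [d0 Hd]] := within_cont_eps _ _ _ c Ax _ e0.
exists d; split => // y ay yb xy.
have Ay : `[a, b]%classic y by rewrite /= in_itv /= ay yb.
exact: (Hd y Ay xy).
Qed.

Lemma final_arith (L CH CL a1 a2 a3 b1 b2 b3 eps : R) :
  0 < L -> 0 < CH -> 0 < CL -> 0 < eps ->
  Num.sqrt (b1 ^+ 2 + b2 ^+ 2 + b3 ^+ 2) <
     eps * Num.min (Num.min L CH) CL / (L + CH + CL) ->
  L * a1 ^+ 2 + CH * a2 ^+ 2 + CL * a3 ^+ 2 <=
     L * b1 ^+ 2 + CH * b2 ^+ 2 + CL * b3 ^+ 2 ->
  Num.sqrt (a1 ^+ 2 + a2 ^+ 2 + a3 ^+ 2) < eps.
Proof.
move=> L0 CH0 CL0 e0.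
set pm := Num.min (Num.min L CH) CL.
set PM := L + CH + CL.
set Sa := a1 ^+ 2 + a2 ^+ 2 + a3 ^+ 2.
set Sb := b1 ^+ 2 + b2 ^+ 2 + b3 ^+ 2.
move=> Hb HV.
have pmL : pm <= L by rewrite /pm !ge_min lexx.
have pmCH : pm <= CH by rewrite /pm !ge_min lexx orbT.
have pmCL : pm <= CL by rewrite /pm !ge_min lexx orbT.
have pm0 : 0 < pm by rewrite /pm !lt_min L0 CH0 CL0.
have PM0 : 0 < PM by rewrite /PM; lra.
have Sb0 : 0 <= Sb by rewrite /Sb !addr_ge0 // sqr_ge0.
have Sa0 : 0 <= Sa by rewrite /Sa !addr_ge0 // sqr_ge0.
set d := eps * pm / PM in Hb.
have d0 : 0 < d by rewrite /d !mulr_gt0 // invr_gt0.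
have Sbd : Sb < d ^+ 2.
  have := sqrtr_ge0 Sb; have := sqr_sqrtr Sb0; move: Hb.
  move: (Num.sqrt Sb) => q; nra.
have dd : PM * d ^+ 2 = eps ^+ 2 * pm * (pm / PM).
  rewrite /d; field; lra.
have pmPM : pm / PM <= 1 by rewrite ler_pdivrMr // mul1r /PM; lra.
have h1 : pm * Sa <= L * a1 ^+ 2 + CH * a2 ^+ 2 + CL * a3 ^+ 2.
  rewrite /Sa; have := sqr_ge0 a1; have := sqr_ge0 a2; have := sqr_ge0 a3; nra.
have h2 : L * b1 ^+ 2 + CH * b2 ^+ 2 + CL * b3 ^+ 2 <= PM * Sb.
  rewrite /Sb /PM; have := sqr_ge0 b1; have := sqr_ge0 b2; have := sqr_ge0 b3; nra.
have h3 : PM * Sb < PM * d ^+ 2 by rewrite ltr_pM2l.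
have h4 : eps ^+ 2 * pm * (pm / PM) <= eps ^+ 2 * pm.
  rewrite -[X in _ <= X]mulr1 ler_wpM2l //; apply: mulr_ge0; [exact: sqr_ge0 | exact: ltW].
have Sae : Sa < eps ^+ 2.
  have : pm * Sa < pm * eps ^+ 2 by rewrite mulrC; lra.
  by rewrite ltr_pM2l.
rewrite -(ger0_norm (ltW e0)) -sqrtr_sqr ltr_sqrt //.
by rewrite exprn_gt0.
Qed.

Lemma lin1 (c A B : R) : c + (A + B) - (c + A) = B.
Proof. ring. Qed.

Lemma lin2 (a b c d : R) : (a - b) - (c - d) = (a - c) - (b - d).
Proof. ring. Qed.

Lemma sol_diff (g x : R -> R) (a s t : R) : integral_sol g x a -> a <= s -> s <= t ->
  mu.-integrable `[s, t] (EFin \o g) /\ x t - x s = \int[mu]_(r in `[s, t]) g r.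
Proof.
move=> H aS st.
have [it xt] := H t (le_trans aS st).
have [_ xs] := H s aS.
have [ist E] := itv_split g a s t aS st it.
split => //.
by rewrite xt xs E lin1.
Qed.

Lemma diff_sol (gx gy x y : R -> R) (t0 tau : R) :
  integral_sol gx x t0 -> integral_sol gy y tau -> tau <= t0 ->
  forall s t, t0 <= s -> s <= t ->
  mu.-integrable `[s, t] (EFin \o (fun r => gx r - gy r)) /\
  (x t - y t) - (x s - y s) = \int[mu]_(r in `[s, t]) (gx r - gy r).
Proof.
move=> hx hy tt0 s t t0s st.
have [ix Ex] := sol_diff _ _ _ _ _ hx t0s st.
have [iy Ey] := sol_diff _ _ _ _ _ hy (le_trans tt0 t0s) st.
split; first exact: intB.
by rewrite RintegralB // -Ex -Ey lin2.
Qed.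


Lemma split_abs (F : R -> R) (a s t : R) : a <= s -> s <= t ->
  mu.-integrable `[a, t] (EFin \o F) ->
  \int[mu]_(x in `[a, t]) `|F x| =
     \int[mu]_(x in `[a, s]) `|F x| + \int[mu]_(x in `[s, t]) `|F x| /\
  0 <= \int[mu]_(x in `[s, t]) `|F x|.
Proof.
move=> aS st H; have [_ E] := itv_split _ _ _ _ aS st (intN H).
by split => //; apply: Rintegral_ge0 => x _; apply: normr_ge0.
Qed.

Lemma mono3 (A1 A2 A3 B1 B2 B3 C1 C2 C3 : R) :
  A1 = B1 + C1 -> A2 = B2 + C2 -> A3 = B3 + C3 -> 0 <= C1 -> 0 <= C2 -> 0 <= C3 ->
  B1 + B2 + B3 <= A1 + A2 + A3.
Proof. move=> -> -> -> *; lra. Qed.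

Lemma diff3 (A1 A2 A3 B1 B2 B3 C1 C2 C3 : R) :
  A1 = B1 + C1 -> A2 = B2 + C2 -> A3 = B3 + C3 ->
  (A1 + A2 + A3) - (B1 + B2 + B3) = C1 + C2 + C3.
Proof. move=> -> -> ->; ring. Qed.

Lemma main_stab (L CH CL RD RH RL EH EL : R)
  (hL : 0 < L) (hCH : 0 < CH) (hCL : 0 < CL) (hRD : 0 < RD) (hRH : 0 < RH)
  (hRL : 0 < RL) (u : R -> R) (xi1 xi2 xi3 : R -> R) (tau : R)
  (hxi : is_solution L CH CL RD RH RL EH EL u xi1 xi2 xi3 tau)
  (t0 : R) (x1 x2 x3 : R -> R) (tt0 : tau <= t0)
  (hx : is_solution L CH CL RD RH RL EH EL u x1 x2 x3 t0) (t : R) (t0t : t0 <= t) :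
  L * (x1 t - xi1 t) ^+ 2 + CH * (x2 t - xi2 t) ^+ 2 + CL * (x3 t - xi3 t) ^+ 2 <=
  L * (x1 t0 - xi1 t0) ^+ 2 + CH * (x2 t0 - xi2 t0) ^+ 2 + CL * (x3 t0 - xi3 t0) ^+ 2.
Proof.
case: hx => hx1 hx2 hx3; case: hxi => hy1 hy2 hy3.
have H1 := diff_sol _ _ _ _ _ _ hx1 hy1 tt0.
have H2 := diff_sol _ _ _ _ _ _ hx2 hy2 tt0.
have H3 := diff_sol _ _ _ _ _ _ hx3 hy3 tt0.
have hal : 0 <= alpha RD RH CH * CH.
  rewrite /alpha /R_DH; apply: mulr_ge0; last exact: ltW.
  apply: divr_ge0 => //; apply: ltW; apply: mulr_gt0 => //.
  by apply: divr_gt0; [exact: mulr_gt0 | exact: addr_gt0].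
have hbl : 0 <= 1 / RL by apply: ltW; apply: divr_gt0.
have ES := energy_step (fun r => x1 r - xi1 r) (fun r => x2 r - xi2 r)
  (fun r => x3 r - xi3 r) _ _ _ u L CH CL _ _ t0 hL hCH hCL hal hbl H1 H2 H3.
have L0 : L != 0 by rewrite gt_eqF.
have CH0 : CH != 0 by rewrite gt_eqF.
have CL0 : CL != 0 by rewrite gt_eqF.
have RL0 : RL != 0 by rewrite gt_eqF.
have Q1 : forall r, L * ((- (1 / L) * x3 r + 1 / L * x2 r * u r)
    - (- (1 / L) * xi3 r + 1 / L * xi2 r * u r)) =
    - (x3 r - xi3 r) + (x2 r - xi2 r) * u r.
  by move=> r; field.
have Q2 : forall r, CH * ((- alpha RD RH CH * x2 r - 1 / CH * x1 r * u r + beta_H EH RH CH)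
    - (- alpha RD RH CH * xi2 r - 1 / CH * xi1 r * u r + beta_H EH RH CH)) =
    - (alpha RD RH CH * CH) * (x2 r - xi2 r) - (x1 r - xi1 r) * u r.
  by move=> r; field.
have Q3 : forall r, CL * ((1 / CL * x1 r - 1 / (RL * CL) * x3 r + beta_L EL RL CL)
    - (1 / CL * xi1 r - 1 / (RL * CL) * xi3 r + beta_L EL RL CL)) =
    (x1 r - xi1 r) - 1 / RL * (x3 r - xi3 r).
  by move=> r; field; rewrite RL0 CL0.
have {ES} ES := ES Q1 Q2 Q3.
pose F1 := fun r => (- (1 / L) * x3 r + 1 / L * x2 r * u r)
    - (- (1 / L) * xi3 r + 1 / L * xi2 r * u r).
pose F2 := fun r => (- alpha RD RH CH * x2 r - 1 / CH * x1 r * u r + beta_H EH RH CH)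
    - (- alpha RD RH CH * xi2 r - 1 / CH * xi1 r * u r + beta_H EH RH CH).
pose F3 := fun r => (1 / CL * x1 r - 1 / (RL * CL) * x3 r + beta_L EL RL CL)
    - (1 / CL * xi1 r - 1 / (RL * CL) * xi3 r + beta_L EL RL CL).
have I1 : forall s t, t0 <= s -> s <= t -> mu.-integrable `[s, t] (EFin \o F1) :=
  fun s t a b => (H1 s t a b).1.
have I2 : forall s t, t0 <= s -> s <= t -> mu.-integrable `[s, t] (EFin \o F2) :=
  fun s t a b => (H2 s t a b).1.
have I3 : forall s t, t0 <= s -> s <= t -> mu.-integrable `[s, t] (EFin \o F3) :=
  fun s t a b => (H3 s t a b).1.
pose V := fun r => L * (x1 r - xi1 r) ^+ 2 + CH * (x2 r - xi2 r) ^+ 2 + CL * (x3 r - xi3 r) ^+ 2.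
pose Phi := fun r => \int[mu]_(z in `[t0, r]) `|F1 z| + \int[mu]_(z in `[t0, r]) `|F2 z|
      + \int[mu]_(z in `[t0, r]) `|F3 z|.
have ES' : forall s t, t0 <= s -> s <= t -> V t - V s <= 2 * (L + CH + CL) *
  (\int[mu]_(x in `[s, t]) `|F1 x| + \int[mu]_(x in `[s, t]) `|F2 x|
   + \int[mu]_(x in `[s, t]) `|F3 x|) ^+ 2 := ES.
change (V t <= V t0).
apply: (key_mono V Phi t0 t (2 * (L + CH + CL))) => //.
- by apply: mulr_ge0 => //; apply: ltW; rewrite !addr_gt0.
- move=> s' t' h1 h2 h3.
  have ht : t0 <= t' := le_trans h1 h2.
  have [E1 P1] := split_abs _ _ _ _ h1 h2 (I1 t0 t' (lexx _) ht).
  have [E2 P2] := split_abs _ _ _ _ h1 h2 (I2 t0 t' (lexx _) ht).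
  have [E3 P3] := split_abs _ _ _ _ h1 h2 (I3 t0 t' (lexx _) ht).
  exact: (mono3 _ _ _ _ _ _ _ _ _ E1 E2 E3 P1 P2 P3).
- move=> x ax xb e e0.
  exact: (Phi_cont _ _ _ _ _ t0t (I1 t0 t (lexx _) t0t) (I2 t0 t (lexx _) t0t)
    (I3 t0 t (lexx _) t0t) x ax xb e e0).
- move=> s' t' h1 h2 h3.
  have ht : t0 <= t' := le_trans h1 h2.
  have [E1 P1] := split_abs _ _ _ _ h1 h2 (I1 t0 t' (lexx _) ht).
  have [E2 P2] := split_abs _ _ _ _ h1 h2 (I2 t0 t' (lexx _) ht).
  have [E3 P3] := split_abs _ _ _ _ h1 h2 (I3 t0 t' (lexx _) ht).
  rewrite /Phi (diff3 _ _ _ _ _ _ _ _ _ E1 E2 E3).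
  exact: ES' s' t' h1 h2.
Qed.

End Helpers.

Local Close Scope classical_set_scope.

Theorem lemma1 (R : realType) (L CH CL RD RH RL EH EL : R)
  (hL : 0 < L) (hCH : 0 < CH) (hCL : 0 < CL) (hRD : 0 < RD) (hRH : 0 < RH)
  (hRL : 0 < RL) (hEH : 0 < EH) (hEL : 0 < EL)
  (u : R -> R) (hu : Linf u)
  (xi1 xi2 xi3 : R -> R) (tau : R)
  (hxi : is_solution L CH CL RD RH RL EH EL u xi1 xi2 xi3 tau) :
  forall eps : R, 0 < eps ->
  exists delta : R, 0 < delta /\
    forall (t0 : R) (x1 x2 x3 : R -> R),
      tau <= t0 ->
      is_solution L CH CL RD RH RL EH EL u x1 x2 x3 t0 ->
      norm3 (x1 t0 - xi1 t0) (x2 t0 - xi2 t0) (x3 t0 - xi3 t0) < delta ->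
      forall t, t0 <= t ->
        norm3 (x1 t - xi1 t) (x2 t - xi2 t) (x3 t - xi3 t) < eps.
Proof.
move=> eps e0.
exists (eps * Num.min (Num.min L CH) CL / (L + CH + CL)); split.
  apply: divr_gt0; last by rewrite !addr_gt0.
  by apply: mulr_gt0 => //; rewrite !lt_min hL hCH hCL.
move=> t0 x1 x2 x3 tt0 hx hd t t0t.
have HV := @main_stab R L CH CL RD RH RL EH EL hL hCH hCL hRD hRH hRL u
  xi1 xi2 xi3 tau hxi t0 x1 x2 x3 tt0 hx t t0t.
rewrite /norm3 in hd *.
exact: (@final_arith R L CH CL _ _ _ _ _ _ eps hL hCH hCL e0 hd HV).
Qed.
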